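(* Let $\alpha=1^{a_1}2^{a_2}\cdots$ be a partition and $n\geq 0$ an integer. Then $$\Big\{\binom X\alpha\Big\}_n=\begin{cases}\dfrac{\mathrm{sgn}(\alpha)}{z_\alpha} & \text{if } n\in\{|\alpha|,|\alpha|+1\},\\[2mm] 0 & \text{otherwise,}\end{cases}$$ where $z_\alpha=\prod_i i^{a_i}a_i!$ and $\mathrm{sgn}(\alpha)=(-1)^{|\alpha|-l(\alpha)}$ is the value of the sign character on a permutation of cycle type $\alpha$.
   Context: For $i\geq 1$, $X_i$ is the class function on $S_n$ (for every $n$) with $X_i(\sigma)$ = number of cycles of length $i$ of $\sigma$. A partition $\alpha$ is written in exponential notation $1^{a_1}2^{a_2}\cdots$ where $a_i$ is the number of parts equal to $i$; $|\alpha|=\sum_i ia_i$ and $l(\alpha)=\sum_i a_i$. Define $\binom X\alpha=\prod_i\binom{X_i}{a_i}\in\mathbb C[X_1,X_2,\dotsc]$. For $p\in\mathbb C[X_1,X_2,\dotsc]$ the signed moment is $\{p\}_n=\frac1{n!}\sum_{\sigma\in S_n}\mathrm{sgn}(\sigma)\,p(X_1(\sigma),X_2(\sigma),\dotsc)$ (with $S_0$ the trivial group). *)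

(* Defs.v *)
From HB Require Import structures.
From mathcomp Require Import all_boot all_order all_algebra all_fingroup.
Set Implicit Arguments. Unset Strict Implicit. Unset Printing Implicit Defensive.
Import Order.TTheory GRing.Theory Num.Theory.
Local Open Scope ring_scope.

(* A partition alpha = 1^{a_1} 2^{a_2} ... is encoded by a finite sequence
   of multiplicities  a : seq nat  with  a_i = nth 0 a (i-1)  (i >= 1);
   multiplicities beyond size a are 0. *)
Definition mult (a : seq nat) (i : nat) : nat := nth 0%N a i.-1.

(* X_i(sigma) = number of cycles of length i of sigma (fixed points count as
   cycles of length 1). *)
Definition Xcyc (n : nat) (s : 'S_n) (i : nat) : nat :=
  #|[set C in porbits s | #|C| == i]|.

Definition sgnp (n : nat) (s : 'S_n) : rat := (-1) ^+ odd_perm s.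

Definition binomX (a : seq nat) (n : nat) (s : 'S_n) : rat :=
  (\prod_(1 <= i < (size a).+1) 'C(Xcyc s i, mult a i))%:R.

Definition smoment (p : forall n : nat, 'S_n -> rat) (n : nat) : rat :=
  (n`!)%:R^-1 * \sum_(s : 'S_n) sgnp s * p n s.

Definition psize (a : seq nat) : nat := (\sum_(1 <= i < (size a).+1) i * mult a i)%N.
Definition plength (a : seq nat) : nat := (\sum_(1 <= i < (size a).+1) mult a i)%N.
Definition zee (a : seq nat) : nat :=
  (\prod_(1 <= i < (size a).+1) (i ^ mult a i * (mult a i)`!))%N.
Definition psgn (a : seq nat) : rat := (-1) ^+ (psize a - plength a)%N.

(* Main.v *)
Require Import Defs.
From HB Require Import structures.
From mathcomp Require Import all_boot all_order all_algebra all_fingroup.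
From mathcomp Require Import ring lra zify.
Set Implicit Arguments. Unset Strict Implicit. Unset Printing Implicit Defensive.
Import Order.TTheory GRing.Theory Num.Theory.
Section Porb.
Variable T : finType.
Implicit Types (s t c r : {perm T}) (A B D : {set T}).

Lemma porbit_closed s A y : (forall z, z \in A -> s z \in A) -> y \in A -> porbit s y \subset A.
Proof.
move=> cl yA; apply/subsetP=> z /porbitP [i ->]; elim: i => [|i IH].
  by rewrite expg0 perm1.
by rewrite expgSr permM; apply: cl.
Qed.

Lemma porbit_s s y z : z \in porbit s y -> s z \in porbit s y.
Proof. by move/porbitP=> [i ->]; apply/porbitP; exists i.+1; rewrite expgSr permM. Qed.

Lemma porbit_agree s t y : {in porbit s y, s =1 t} -> porbit t y = porbit s y.
Proof.
move=> e.
have E : forall i, (t ^+ i)%g y = (s ^+ i)%g y.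
  elim=> [|i IH]; first by rewrite !expg0 !perm1.
  by rewrite !expgSr !permM IH e //; apply: mem_porbit.
by apply/setP=> z; apply/porbitP/porbitP => [][i ->]; exists i; rewrite E.
Qed.

Lemma porbit_fix s x : s x = x -> porbit s x = [set x].
Proof.
move=> sx; apply/eqP; rewrite eqEsubset sub1set porbit_id andbT.
apply: porbit_closed; last by rewrite inE.
by move=> z; rewrite !inE => /eqP ->; rewrite sx.
Qed.

Lemma porbitsE s D y : D \in porbits s -> y \in D -> porbit s y = D.
Proof. by case/imsetP=> x _ -> yx; apply/eqP; rewrite eq_porbit_mem. Qed.

Lemma porbits_neq0 s D : D \in porbits s -> D != set0.
Proof. by case/imsetP=> x _ ->; apply/set0Pn; exists x; apply: porbit_id. Qed.

Lemma notin_porbit s x j : s x = x -> j != x -> x \notin porbit s j.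
Proof. by move=> sx jx; rewrite porbit_sym porbit_fix // inE. Qed.

Lemma porbit_tperm s x j : s x = x -> j != x ->
  porbit (s * tperm x j)%g x = x |: porbit s j.
Proof.
move=> sx jx; set t := (s * tperm x j)%g.
have tx : t x = j by rewrite permM sx tpermL.
apply/eqP; rewrite eqEsubset; apply/andP; split.
  apply: porbit_closed; last by rewrite setU11.
  move=> z /setU1P [-> | zP]; first by rewrite tx setU1r // porbit_id.
  have szP := porbit_s zP.
  rewrite permM; case: tpermP => [_|_|_ _]; first by rewrite setU1r // porbit_id.
    by rewrite setU11.
  by rewrite setU1r.
rewrite subUset sub1set porbit_id /=.
have jt : j \in porbit t x by rewrite -tx porbit_s // porbit_id.
apply: porbit_closed => //.
move=> z zt; have : s z = tperm x j (t z) by rewrite permM tpermK.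
move=> ->; have := porbit_s zt; case: tpermP => // _ _; exact: porbit_id.
Qed.

Definition cycp D c := perm_on D c && (D \in porbits c).
Definition sgn s : rat := ((-1) ^+ odd_perm s)%R.
Local Open Scope ring_scope.

Lemma perm_onS A B s : A \subset B -> perm_on A s -> perm_on B s.
Proof. by move=> AB h; apply: subset_trans AB. Qed.

Lemma cyc_step D x j c : x \in D -> j \in D :\ x ->
  (cycp D (c * tperm x j)%g && ((c * tperm x j)%g x == j)) = cycp (D :\ x) c.
Proof.
move=> xD; rewrite !inE => /andP [jx jD].
have tpD : perm_on D (tperm x j).
  by apply: perm_onS (tperm_on x j); apply/subsetP=> z; rewrite !inE => /orP[]/eqP->.
apply/idP/idP.
  case/andP=> /andP [pD oD] /eqP tx.
  have cx : c x = x.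
    by move: tx; rewrite permM => /(congr1 (tperm x j)); rewrite tpermK tpermR.
  have pcD : perm_on D c.
    have -> : c = (c * tperm x j * tperm x j)%g by rewrite -mulgA tperm2 mulg1.
    exact: perm_onM.
  apply/andP; split.
    apply/subsetP=> z; rewrite inE => cz; rewrite !inE (subsetP pcD) // andbT.
    by apply: contraNneq cz => ->; rewrite cx.
  have E := porbit_tperm cx jx.
  rewrite (porbitsE oD xD) in E.
  by rewrite E setU1K ?notin_porbit // imset_f.
case/andP=> pc oc.
have cx : c x = x by apply: (out_perm pc); rewrite setD11.
have tx : (c * tperm x j)%g x = j by rewrite permM cx tpermL.
rewrite tx eqxx andbT; apply/andP; split.
  by apply: perm_onM => //; apply: perm_onS pc; apply: subsetDl.
have jD1 : j \in D :\ x by rewrite !inE jx.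
rewrite -(setD1K xD) -(porbitsE oc jD1) -porbit_tperm // imset_f //.
Qed.


Lemma sgnM s t : sgn (s * t)%g = sgn s * sgn t.
Proof. by rewrite /sgn odd_permM signr_addb. Qed.

Lemma sgn_tperm s x j : x != j -> sgn (s * tperm x j)%g = - sgn s.
Proof. by move=> xj; rewrite sgnM /sgn odd_tperm xj mulrN1. Qed.

Lemma sgn1 : sgn 1%g = 1.
Proof. by rewrite /sgn odd_perm1. Qed.

Lemma cyc_sum_aux n D : #|D| = n.+1 ->
  \sum_(c | cycp D c) sgn c = (-1) ^+ n * (n`!)%:R.
Proof.
elim: n D => [|n IH] D hD.
  have /cards1P [x Dx] : #|D| == 1 by rewrite hD.
  rewrite (big_pred1 1%g) ?sgn1 ?expr0 ?mulr1 // => c; rewrite /cycp /=.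
  apply/idP/eqP => [/andP [pc _] | ->].
    by apply: (perm_on_id pc); rewrite hD.
  by rewrite perm_on1 Dx -(porbit_fix (perm1 x)) imset_f.
have [x xD] : exists x, x \in D.
  by apply/set0Pn; rewrite -card_gt0 hD.
have hD' : #|D :\ x| = n.+1 by move: hD; rewrite (cardsD1 x D) xD add1n => -[].
rewrite (partition_big (fun c => c x) (fun j => j \in D :\ x)); last first.
  move=> c /andP [pc oc]; rewrite !inE (perm_closed _ pc) xD andbT.
  apply/negP => /eqP cx; have := porbitsE oc xD; rewrite porbit_fix // => Dx.
  by move: hD; rewrite -Dx cards1.
have Hj : forall j, j \in D :\ x ->
    \sum_(c | cycp D c && (c x == j)) sgn c = - ((-1) ^+ n * (n`!)%:R).
  move=> j jD; rewrite (reindex_inj (mulIg (tperm x j))) /=.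
  rewrite (eq_bigl (fun c => cycp (D :\ x) c)); last by move=> c; rewrite cyc_step.
  have xj : x != j by move: jD; rewrite !inE eq_sym => /andP [].
  rewrite (eq_bigr (fun c => - sgn c)); last by move=> c _; rewrite sgn_tperm.
  by rewrite sumrN IH.
rewrite (eq_bigr _ Hj).
rewrite sumr_const hD'.
rewrite factS natrM exprS -mulr_natr; set u := (-1) ^+ n; set v := (n`!)%:R.
ring.
Qed.

Lemma cyc_sum D : D != set0 ->
  \sum_(c | cycp D c) sgn c = (-1) ^+ (#|D|.-1) * ((#|D|.-1)`!)%:R.
Proof.
move=> D0; apply: cyc_sum_aux; rewrite prednK //; by rewrite card_gt0.
Qed.

Lemma sgn_sum B : \sum_(s | perm_on B s) sgn s = ((#|B| <= 1)%N)%:R.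
Proof.
case: (leqP #|B| 1) => hB.
  rewrite (big_pred1 1%g) ?sgn1 // => s /=; apply/idP/eqP => [ps | ->].
    exact: perm_on_id ps hB.
  exact: perm_on1.
have /card_gt1P [x [y [xB yB xy]]] := hB.
set S := (\sum_(s | _) _).
have tB : perm_on B (tperm x y).
  by apply: perm_onS (tperm_on x y); apply/subsetP=> z; rewrite !inE => /orP[]/eqP->.
have : S = - S.
  rewrite -sumrN /S (reindex_inj (mulgI (tperm x y))) /=.
  apply: eq_big => s.
    apply/idP/idP => h; last exact: perm_onM.
    by rewrite -(tpermKg x y s); apply: perm_onM.
  by move=> _; rewrite sgnM {1}/sgn odd_tperm xy expr1 mulN1r.
have -> : ((false : nat)%:R : rat) = 0 by [].
move=> h; lra.
Qed.


Lemma prodE D B c r y : perm_on D c -> perm_on (B :\: D) r ->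
  (c * r)%g y = if y \in D then c y else r y.
Proof.
move=> pc pr; rewrite permM; case: ifP => yD.
  by apply: (out_perm pr); rewrite inE (perm_closed _ pc) yD.
by rewrite (out_perm pc) // yD.
Qed.

Lemma fixD_out D B r z : perm_on (B :\: D) r -> z \notin D -> r z \notin D.
Proof.
move=> pr zD; apply/negP => rzD.
have : r (r z) = r z by apply: (out_perm pr); rewrite inE rzD.
by move/perm_inj => E; move: rzD; rewrite E (negbTE zD).
Qed.

Lemma porbit_prod_out D B c r y : perm_on D c -> perm_on (B :\: D) r ->
  y \notin D -> porbit (c * r)%g y = porbit r y.
Proof.
move=> pc pr yD; apply: porbit_agree => z zr.
have : porbit r y \subset ~: D.
  by apply: porbit_closed; [move=> u; rewrite !inE; apply: fixD_out pr | rewrite inE].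
move/subsetP/(_ z zr); rewrite inE => zD.
by rewrite (prodE _ pc pr) (negbTE zD).
Qed.

Lemma decomp B D (F : {perm T} -> rat) : D \subset B ->
  \sum_(s | perm_on B s && (D \in porbits s)) F s =
  \sum_(c | cycp D c) \sum_(r | perm_on (B :\: D) r) F (c * r)%g.
Proof.
move=> DB.
set A := [set p : {perm T} * {perm T} | cycp D p.1 && perm_on (B :\: D) p.2].
have -> : \sum_(c | cycp D c) \sum_(r | perm_on (B :\: D) r) F (c * r)%g =
          \sum_(p in A) F (p.1 * p.2)%g.
  by rewrite pair_big_dep; apply: eq_bigl => p; rewrite inE.
rewrite -(big_imset (h := fun p => (p.1 * p.2)%g)); last first.
  move=> [c1 r1] [c2 r2]; rewrite !inE /= => /andP [/andP [pc1 _] pr1].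
  move=> /andP [/andP [pc2 _] pr2] E.
  have ec : c1 = c2.
    apply/permP => y; case: (boolP (y \in D)) => yD.
      by have := congr1 (fun s => s y) E; rewrite /= (prodE _ pc1 pr1) (prodE _ pc2 pr2) yD.
    by rewrite (out_perm pc1 yD) (out_perm pc2 yD).
  by move: E; rewrite ec => /mulgI ->.
apply: eq_bigl => s; apply/idP/idP.
  case/andP=> ps oD.
  have cl : forall z, z \in D -> s z \in D.
    by move=> z zD; rewrite -(porbitsE oD zD) porbit_s // porbit_id.
  have rinj : injective (fun z => if z \in D then s z else z).
    move=> z1 z2; case: ifP => z1D; case: ifP => z2D //.
    - exact: perm_inj.
    - by move=> E; move: (cl _ z1D); rewrite E z2D.
    - by move=> E; move: (cl _ z2D); rewrite -E z1D.
  pose c := perm rinj.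
  have pc : perm_on D c.
    by apply/subsetP=> z; rewrite inE permE; case: ifP => // _; rewrite eqxx.
  have cs : {in D, c =1 s} by move=> z zD; rewrite permE zD.
  apply/imsetP; exists (c, (c^-1 * s)%g); last by rewrite /= mulKVg.
  rewrite inE /=; apply/andP; split.
    apply/andP; split => //.
    case/imsetP: oD => y _ Dy; rewrite Dy -(porbit_agree (s := s) (t := c)) ?imset_f //.
    by move=> z; rewrite -Dy => zD; rewrite cs.
  apply/subsetP => z; rewrite inE permM => h.
  case: (boolP (z \in D)) => zD.
    have cz : c^-1%g z \in D by rewrite (perm_closed _ (perm_onV pc)).
    by move: h; rewrite -cs // permKV eqxx.
  move: h; rewrite (out_perm (perm_onV pc) zD) => h.
  by rewrite inE zD /=; apply: (subsetP ps); rewrite inE.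
case/imsetP=> [[c r]]; rewrite inE /= => /andP [/andP [pc oc] pr] ->.
apply/andP; split.
  apply: perm_onM; first by apply: perm_onS pc.
  by apply: perm_onS pr; apply: subsetDl.
case/imsetP: oc => y _ Dy; rewrite Dy -(porbit_agree (s := c) (t := (c * r)%g)) ?imset_f //.
by move=> z; rewrite -Dy => zD; rewrite (prodE _ pc pr) zD.
Qed.

Definition cyc B s i := #|[set E in porbits s | (E \subset B) && (#|E| == i)]|.

Lemma cyc_prod B D c r i : perm_on D c -> perm_on (B :\: D) r ->
  cyc (B :\: D) (c * r)%g i = cyc (B :\: D) r i.
Proof.
move=> pc pr; rewrite /cyc; apply: eq_card => E; rewrite !inE.
case sub: (E \subset B :\: D); last by rewrite !andbF.
rewrite !andTb; congr (_ && _).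
apply/imsetP/imsetP => [][y _ Ey]; exists y => //.
  have : y \in B :\: D by rewrite (subsetP sub) // Ey porbit_id.
  by rewrite inE => /andP [yD _]; rewrite Ey (porbit_prod_out pc pr).
have : y \in B :\: D by rewrite (subsetP sub) // Ey porbit_id.
by rewrite inE => /andP [yD _]; rewrite Ey (porbit_prod_out pc pr).
Qed.

Lemma cyc_remove B s D i j :
  D \in [set E in porbits s | (E \subset B) && (#|E| == i)] ->
  cyc (B :\: D) s j = (cyc B s j - (j == i))%N.
Proof.
rewrite inE => /andP [oD /andP [DB /eqP Di]].
rewrite /cyc.
set S := [set E in porbits s | (E \subset B) && (#|E| == j)].
have -> : [set E in porbits s | (E \subset B :\: D) && (#|E| == j)] = S :\ D.
  apply/setP => E; rewrite !inE.
  case oE: (E \in porbits s); rewrite ?andbF //=.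
  rewrite subsetD; case: (E \subset B); rewrite ?andbF //=; congr (_ && _).
  apply/idP/idP.
    apply: contraTneq => ->; rewrite -setI_eq0 setIid; exact: porbits_neq0 oD.
  move=> ED; rewrite -setI_eq0; apply/eqP; apply/setP => z; rewrite !inE.
  apply/negP => /andP [zE zD]; move/negP: ED; apply.
  by rewrite -(porbitsE oE zE) (porbitsE oD zD).
rewrite (cardsD1 D S) !inE oD DB Di /= eq_sym.
by case: (j == i) => /=; rewrite ?add1n ?subn1 ?subn0.
Qed.

End Porb.

Local Open Scope ring_scope.
Section Main.
Variable T : finType.
Variable m : nat.
Implicit Types (s t c r : {perm T}) (A B D : {set T}) (a : nat -> nat).

Definition fB a B s := (\prod_(1 <= j < m.+1) 'C(cyc B s j, a j))%N.
Definition GB a B := \sum_(s | perm_on B s) sgn s * (fB a B s)%:R.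
Definition dec a i := fun j => if j == i then (a i).-1 else a j.

Lemma bigD1_iota (F : nat -> nat) (op : Monoid.com_law 0%N) i : (1 <= i <= m)%N ->
  \big[op/0%N]_(1 <= j < m.+1) F j = op (F i) (\big[op/0%N]_(1 <= j < m.+1 | j != i) F j).
Proof.
move=> hi; apply: bigD1_seq; last exact: iota_uniq.
by rewrite mem_index_iota ltnS.
Qed.

Lemma bigD1_iotaM (F : nat -> nat) i : (1 <= i <= m)%N ->
  (\prod_(1 <= j < m.+1) F j = F i * \prod_(1 <= j < m.+1 | j != i) F j)%N.
Proof.
move=> hi; apply: bigD1_seq; last exact: iota_uniq.
by rewrite mem_index_iota ltnS.
Qed.

Lemma f_mark a B s i : (1 <= i <= m)%N -> (0 < a i)%N ->
  (a i * fB a B s = \sum_(D in [set E in porbits s | (E \subset B) && (#|E| == i)])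
      fB (dec a i) (B :\: D) s)%N.
Proof.
move=> hi ai.
rewrite (eq_bigr (fun _ => \prod_(1 <= j < m.+1) 'C(cyc B s j - (j == i), dec a i j))%N);
  last by move=> D hD; rewrite /fB; apply: eq_bigr => j _; rewrite (cyc_remove _ hD).
rewrite sum_nat_const -/(cyc B s i) /fB !(bigD1_iotaM _ hi).
rewrite /dec eqxx subn1 [RHS]mulnA mul_bin_diag prednK // [LHS]mulnA; congr (_ * _)%N.
by apply: eq_bigr => j /negbTE ->; rewrite subn0.
Qed.

Lemma G_step a B i : (1 <= i <= m)%N -> (0 < a i)%N ->
  (a i)%:R * GB a B = \sum_(D : {set T} | (D \subset B) && (#|D| == i))
      (\sum_(c | cycp D c) sgn c) * GB (dec a i) (B :\: D).
Proof.
move=> hi ai; rewrite /GB mulr_sumr.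
transitivity (\sum_(s | perm_on B s) \sum_(D : {set T} | (D \subset B) && (#|D| == i))
   (if D \in porbits s then sgn s * (fB (dec a i) (B :\: D) s)%:R else 0)).
  apply: eq_bigr => s _.
  rewrite mulrCA -natrM f_mark // natr_sum mulr_sumr -big_mkcondr.
  by apply: eq_bigl => D; rewrite !inE; case: (D \in porbits s); rewrite ?andbT ?andbF.
rewrite exchange_big; apply: eq_bigr => D /andP [DB _].
rewrite -big_mkcondr /= decomp // mulr_suml; apply: eq_bigr => c /andP [pc _].
rewrite mulr_sumr; apply: eq_bigr => r pr; rewrite sgnM -mulrA; congr (_ * (_ * _)).
by rewrite /fB; congr (_%:R); apply: eq_bigr => j _; rewrite (cyc_prod _ pc pr).
Qed.

Definition kk a := (\sum_(1 <= j < m.+1) j * a j)%N.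
Definition ll a := (\sum_(1 <= j < m.+1) a j)%N.
Definition zz a := (\prod_(1 <= j < m.+1) (j ^ a j * (a j)`!))%N.

Lemma bigD1_iotaA (F : nat -> nat) i : (1 <= i <= m)%N ->
  (\sum_(1 <= j < m.+1) F j = F i + \sum_(1 <= j < m.+1 | j != i) F j)%N.
Proof.
move=> hi; apply: bigD1_seq; last exact: iota_uniq.
by rewrite mem_index_iota ltnS.
Qed.

Lemma dec_ne a i j : j != i -> dec a i j = a j.
Proof. by rewrite /dec => /negbTE ->. Qed.

Lemma dec_kk a i : (1 <= i <= m)%N -> (0 < a i)%N -> kk a = (kk (dec a i) + i)%N.
Proof.
move=> hi ai; rewrite /kk !(bigD1_iotaA _ hi) [in RHS](eq_bigr (fun j => j * a j)%N);
  last by move=> j /dec_ne ->.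
rewrite /dec eqxx.
by rewrite -(prednK ai) mulnS /=; lia.
Qed.

Lemma dec_ll a i : (1 <= i <= m)%N -> (0 < a i)%N -> ll a = (ll (dec a i)).+1.
Proof.
move=> hi ai; rewrite /ll !(bigD1_iotaA _ hi) [in RHS](eq_bigr (fun j => a j)%N);
  last by move=> j /dec_ne ->.
rewrite /dec eqxx.
by rewrite -(prednK ai) /=; lia.
Qed.

Lemma dec_zz a i : (1 <= i <= m)%N -> (0 < a i)%N -> zz a = (zz (dec a i) * (i * a i))%N.
Proof.
move=> hi ai; rewrite /zz !(bigD1_iotaM _ hi) [in RHS](eq_bigr (fun j => j ^ a j * (a j)`!)%N);
  last by move=> j /dec_ne ->.
rewrite /dec eqxx.
rewrite -(prednK ai) /= expnS factS.
set u := (i ^ _)%N; set v := (_`!)%N; set w := (\prod_(_ <- _ | _) _)%N.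
lia.
Qed.

Lemma main L : forall a B, ll a = L ->
  (zz a)%:R * GB a B = if (#|B| == kk a) || (#|B| == (kk a).+1)
                       then (-1) ^+ (kk a + ll a) * ((#|B|)`!)%:R else 0.
Proof.
elim: L => [|L IH] a B hL.
  have a0 : forall j, (1 <= j <= m)%N -> a j = 0%N.
    move/eqP: hL; rewrite /ll sum_nat_seq_eq0 => /allP h j hj.
    by apply/eqP; have := h j; rewrite mem_index_iota ltnS hj => /(_ isT).
  have k0 : kk a = 0%N.
    by apply: big1_seq => j /andP [_]; rewrite mem_index_iota ltnS => /a0 ->; rewrite muln0.
  have z0 : zz a = 1%N.
    by apply: big1_seq => j /andP [_]; rewrite mem_index_iota ltnS => /a0 ->.
  have G0 : GB a B = ((#|B| <= 1)%N)%:R.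
    rewrite -sgn_sum; apply: eq_bigr => s _.
    rewrite /fB big1_seq ?mulr1 // => j /andP [_]; rewrite mem_index_iota ltnS => /a0 ->.
    by rewrite bin0.
  rewrite k0 z0 G0 hL mul1r.
  by case: #|B| => [|[|n]] //=; rewrite ?expr0 ?mul1r.
case: (boolP (has (fun j => 0 < a j)%N (index_iota 1 m.+1))) => [/hasP [i iR ai] | /hasPn H];
  last first.
  have : ll a = 0%N.
    by apply: big1_seq => j /andP [_ jR]; move: (H j jR); rewrite lt0n negbK => /eqP.
  by rewrite hL.
have hi : (1 <= i <= m)%N by move: iR; rewrite mem_index_iota ltnS.
set a' := dec a i.
have hL' : ll a' = L by move: hL; rewrite (dec_ll hi ai) => -[].
rewrite (dec_zz hi ai) (dec_kk hi ai) hL.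
have -> : ((zz a' * (i * a i))%:R * GB a B =
   i%:R * ((zz a')%:R * ((a i)%:R * GB a B)) :> rat).
  rewrite !natrM; move: (zz a')%:R (i%:R) (a i)%:R (GB a B) => x1 x2 x3 x4; ring.
rewrite G_step //.
rewrite -/a' !mulr_sumr.
set N := #|B|; set k' := kk a'.
have term : forall D : {set T}, (D \subset B) && (#|D| == i) ->
    i%:R * ((zz a')%:R * ((\sum_(c | cycp D c) sgn c) * GB a' (B :\: D))) =
    (-1) ^+ (i.-1) * ((i.-1)`!)%:R * i%:R *
    (if ((N - i)%N == k') || ((N - i)%N == k'.+1) then (-1) ^+ (k' + L) * (((N - i)%N)`!)%:R else 0).
  move=> D /andP [DB /eqP Di].
  have D0 : D != set0 by rewrite -card_gt0 Di; case/andP: hi.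
  have cBD : #|B :\: D| = (N - i)%N by rewrite cardsD (setIidPr DB) Di.
  rewrite cyc_sum // Di -cBD -hL' -(IH a' (B :\: D) hL').
  move: ((-1) ^+ i.-1) ((i.-1)`!)%:R (i%:R) ((zz a')%:R) (GB a' (B :\: D)) => x1 x2 x3 x4 x5.
  ring.
rewrite (eq_bigr _ term) sumr_const.
have cnt : #|[pred D : {set T} | (D \subset B) && (#|D| == i)]| = 'C(N, i).
  by rewrite -cards_draws; apply: eq_card => D; rewrite !inE.
rewrite cnt.
case: (leqP i N) => iN; last first.
  rewrite bin_small // mulr0n ifF //; apply/negbTE; apply/norP; split; apply/eqP; lia.
have e1 : ((N - i)%N == k') = (N == k' + i)%N by apply/eqP/eqP; lia.
have e2 : ((N - i)%N == k'.+1) = (N == (k' + i).+1)%N by apply/eqP/eqP; lia.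
rewrite e1 e2; case: ifP => _; last by rewrite mulr0 mul0rn.
have [i' ei] : exists i', i = i'.+1 by exists i.-1; rewrite prednK //; case/andP: hi.
rewrite -(bin_fact iN) ei /= factS !natrM.
rewrite (_ : (k' + i'.+1 + L.+1 = i' + (k' + L) + 2)%N); last by lia.
rewrite !exprD expr2 mulrNN mulr1 -[_ *+ 'C(N, i'.+1)]mulr_natr.
move: ((-1) ^+ i') ((-1) ^+ k') ((-1) ^+ L) ('C(N, i'.+1))%:R (i'`!)%:R (((N - i'.+1)%N)`!)%:R (i'.+1)%:R.
move=> x1 x2 x3 x4 x5 x6 x7; ring.
Qed.
End Main.

Unset Implicit Arguments.
Theorem theorem2p5 (a : seq nat) (n : nat) :
  smoment (binomX a) n =
  (if (n == psize a) || (n == (psize a).+1)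
   then psgn a / (zee a)%:R
   else 0).
Proof.
have H := @main 'I_n (size a) _ (mult a) setT erefl.
rewrite cardsT card_ord in H.
have GE : GB (size a) (mult a) [set: 'I_n] = \sum_(s : 'S_n) sgnp s * binomX a s.
  apply: eq_big => s; first by apply/subsetP => x; rewrite inE.
  move=> _; rewrite /binomX /fB; congr (_ * _%:R); apply: eq_bigr => j _.
  by congr 'C(_, _); rewrite /cyc /Xcyc; apply: eq_card => E; rewrite !inE subsetT.
rewrite GE in H.
change (kk (size a) (mult a)) with (psize a) in H.
change (ll (size a) (mult a)) with (plength a) in H.
change (zz (size a) (mult a)) with (zee a) in H.
rewrite /smoment.
have zP : (zee a)%:R != 0 :> rat.
  rewrite pnatr_eq0 -lt0n /zee big_seq; apply: prodn_cond_gt0 => j.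
  by rewrite mem_index_iota => /andP [j1 _]; rewrite muln_gt0 expn_gt0 j1 fact_gt0.
have nP : (n`!)%:R != 0 :> rat by rewrite pnatr_eq0 -lt0n fact_gt0.
have lk : (plength a <= psize a)%N.
  rewrite /plength /psize [X in (X <= _)%N]big_seq [X in (_ <= X)%N]big_seq.
  apply: leq_sum => j; rewrite mem_index_iota => /andP [j1 _].
  by rewrite leq_pmull.
move: H; case: ifP => _ H.
  rewrite /psgn (_ : (psize a + plength a = (psize a - plength a) + 2 * plength a)%N) in H;
    last by lia.
  rewrite exprD exprM expr2 mulrNN mulr1 expr1n mulr1 in H.
  move: H; move: (\sum_(s : 'S_n) sgnp s * binomX a s) => G H.
  have -> : G = (zee a)%:R^-1 * ((-1) ^+ (psize a - plength a) * (n`!)%:R).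
    by rewrite -H mulrA mulVf // mul1r.
  rewrite /psgn; move: ((-1) ^+ (psize a - plength a)) => x; field; rewrite nP zP.
  done.
move: H; move: (\sum_(s : 'S_n) sgnp s * binomX a s) => G H.
have -> : G = 0 by move/eqP: H; rewrite mulf_eq0 (negbTE zP) => /eqP.
by rewrite mulr0.
Qed.
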